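(* Let $F$ be the free loop on a countably infinite set of generators and let $L=F/F_3$ (the free loop of nilpotency class $2$ in the sense of Bruck on countably many generators). Then the group $\mathrm{LMlt}(L)$ is not nilpotent.
   Context: A loop is a set with a product and two-sided identity in which all left and right multiplications are bijective; $\mathrm{LMlt}(L)$ is the group of permutations of $L$ generated by the left multiplications $L_a\colon x\mapsto ax$. For a loop $F$ and a normal subloop $N$, $[N,F]$ denotes the smallest subloop of $N$ which is normal in $F$ and such that $N/[N,F]$ is contained in the centre of $F/[N,F]$ (the centre of a loop consisting of the elements that commute and associate with all elements). Bruck's lower central series is $F_1=F$, $F_{k+1}=[F_k,F]$. *)

(* Defs.v *)
From Stdlib Require Import PeanoNat.

(* Bijectivity is witnessed by the left and
   right division operations (the inverses of L_a and R_a). *)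
Record Loop := {
  carrier :> Type;
  mul : carrier -> carrier -> carrier;
  one : carrier;
  ldiv : carrier -> carrier -> carrier;
  rdiv : carrier -> carrier -> carrier;
  mul1l : forall x, mul one x = x;
  mul1r : forall x, mul x one = x;
  mulKl : forall a x, mul a (ldiv a x) = x;
  ldivKl : forall a x, ldiv a (mul a x) = x;
  mulKr : forall a x, mul (rdiv x a) a = x;
  rdivKr : forall a x, rdiv (mul x a) a = x
}.

Arguments mul {l} _ _.
Arguments one {l}.
Arguments ldiv {l} _ _.
Arguments rdiv {l} _ _.

Definition loop_hom {A B : Loop} (f : A -> B) : Prop :=
  forall x y, f (mul x y) = mul (f x) (f y).

Definition free_loop_on {F : Loop} (iota : nat -> F) : Prop :=
  forall (M : Loop) (f : nat -> M),
    (exists g : F -> M, loop_hom g /\ forall n, g (iota n) = f n) /\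
    (forall g1 g2 : F -> M, loop_hom g1 -> loop_hom g2 ->
       (forall n, g1 (iota n) = g2 (iota n)) -> forall x, g1 x = g2 x).

Section LoopSets.
Variable F : Loop.

Definition subloop (K : F -> Prop) : Prop :=
  K one /\ (forall x y, K x -> K y -> K (mul x y) /\ K (ldiv x y) /\ K (rdiv x y)).

Definition set_eq (P Q : F -> Prop) : Prop := forall z, P z <-> Q z.

Definition lcoset (x : F) (K : F -> Prop) : F -> Prop :=
  fun z => exists k, K k /\ z = mul x k.
Definition rcoset (K : F -> Prop) (x : F) : F -> Prop :=
  fun z => exists k, K k /\ z = mul k x.

Definition normal_subloop (K : F -> Prop) : Prop :=
  subloop K /\
  forall x y,
    set_eq (lcoset x K) (rcoset K x) /\
    set_eq (fun z => exists w, lcoset y K w /\ z = mul x w) (lcoset (mul x y) K) /\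
    set_eq (fun z => exists w, rcoset K x w /\ z = mul w y) (rcoset K (mul x y)).

(* equality of cosets aK = bK, i.e. equality in F/K *)
Definition cong (K : F -> Prop) (a b : F) : Prop := set_eq (lcoset a K) (lcoset b K).

(* N/K is contained in the centre of F/K: each nK commutes and associates
   (in every position) with all elements of F/K. *)
Definition central_mod (K N : F -> Prop) : Prop :=
  forall n x y, N n ->
    cong K (mul n x) (mul x n) /\
    cong K (mul (mul n x) y) (mul n (mul x y)) /\
    cong K (mul (mul x n) y) (mul x (mul n y)) /\
    cong K (mul (mul x y) n) (mul x (mul y n)).

(* [N,F]: the smallest subloop of N, normal in F, with N/[N,F] central in
   F/[N,F]; realised as the intersection of all such subloops. *)
Definition bruck_comm (N : F -> Prop) : F -> Prop :=
  fun z => forall K : F -> Prop,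
    normal_subloop K -> (forall k, K k -> N k) -> central_mod K N -> K z.

(* Bruck's lower central series, shifted: bruck_lcs 0 = F_1 = F,
   bruck_lcs (k+1) = F_{k+2} = [F_{k+1}, F]. *)
Fixpoint bruck_lcs (k : nat) : F -> Prop :=
  match k with
  | 0 => fun _ => True
  | S k' => bruck_comm (bruck_lcs k')
  end.

End LoopSets.

(* A permutation of T is represented by a pair (forward map, inverse map);
   the generated subgroups below only ever produce genuine inverse pairs. *)
Definition perm_pair (T : Type) := ((T -> T) * (T -> T))%type.

Definition pone {T} : perm_pair T := (fun x => x, fun x => x).
Definition pmul {T} (g h : perm_pair T) : perm_pair T :=
  (fun x => fst g (fst h x), fun x => snd h (snd g x)).
Definition pinv {T} (g : perm_pair T) : perm_pair T := (snd g, fst g).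
Definition pcomm {T} (g h : perm_pair T) : perm_pair T :=
  pmul (pinv g) (pmul (pinv h) (pmul g h)).

Inductive gen {T} (S : perm_pair T -> Prop) : perm_pair T -> Prop :=
| gen_base g : S g -> gen S g
| gen_one : gen S pone
| gen_inv g : gen S g -> gen S (pinv g)
| gen_mul g h : gen S g -> gen S h -> gen S (pmul g h).

(* lower central series of a group G of permutations:
   glcs G 0 = G = gamma_1, glcs G (k+1) = [gamma_{k+1}, G] = gamma_{k+2} *)
Fixpoint glcs {T} (G : perm_pair T -> Prop) (k : nat) : perm_pair T -> Prop :=
  match k with
  | 0 => G
  | S k' => gen (fun c => exists g h, glcs G k' g /\ G h /\ c = pcomm g h)
  end.

Definition nilpotent_group {T} (G : perm_pair T -> Prop) : Prop :=
  exists n, forall g, glcs G n g -> forall x, fst g x = x.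

Definition LMlt (L : Loop) : perm_pair L -> Prop :=
  gen (fun g => exists a : L, g = (fun x => mul a x, fun x => ldiv a x)).

(* Main.v *)
Require Import Defs.
From Stdlib Require Import ZArith Lia Bool ClassicalEpsilon.

Lemma ldiv_self {F : Loop} (x : F) : ldiv x x = one.
Proof. rewrite <- (mul1r F x) at 2. apply ldivKl. Qed.

Lemma rdiv_self {F : Loop} (x : F) : rdiv x x = one.
Proof. rewrite <- (mul1l F x) at 1. apply rdivKr. Qed.

Lemma ldiv_one_iff {F : Loop} (a b : F) : ldiv a b = one <-> a = b.
Proof.
  split.
  - intro H. rewrite <- (mulKl F a b), H. symmetry. apply mul1r.
  - intros ->. apply ldiv_self.
Qed.

Lemma rdiv_one_iff {F : Loop} (a b : F) : rdiv a b = one <-> a = b.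
Proof.
  split.
  - intro H. rewrite <- (mulKr F b a), H. apply mul1l.
  - intros ->. apply rdiv_self.
Qed.

Section Gen.
Variable F : Loop.

Lemma lcoset_iff (K : F -> Prop) x z : lcoset F x K z <-> K (ldiv x z).
Proof.
  split.
  - intros [k [Hk ->]]. rewrite ldivKl. exact Hk.
  - intro H. exists (ldiv x z). split; [exact H|]. rewrite mulKl. reflexivity.
Qed.

Lemma rcoset_iff (K : F -> Prop) x z : rcoset F K x z <-> K (rdiv z x).
Proof.
  split.
  - intros [k [Hk ->]]. rewrite rdivKr. exact Hk.
  - intro H. exists (rdiv z x). split; [exact H|]. rewrite mulKr. reflexivity.
Qed.

Lemma ex_l_iff (K : F -> Prop) x y z :
  (exists w, lcoset F y K w /\ z = mul x w) <-> K (ldiv y (ldiv x z)).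
Proof.
  split.
  - intros [w [Hw ->]]. rewrite ldivKl. apply lcoset_iff. exact Hw.
  - intro H. exists (ldiv x z). split; [apply lcoset_iff; exact H|].
    rewrite mulKl. reflexivity.
Qed.

Lemma ex_r_iff (K : F -> Prop) x y z :
  (exists w, rcoset F K x w /\ z = mul w y) <-> K (rdiv (rdiv z y) x).
Proof.
  split.
  - intros [w [Hw ->]]. rewrite rdivKr. apply rcoset_iff. exact Hw.
  - intro H. exists (rdiv z y). split; [apply rcoset_iff; exact H|].
    rewrite mulKr. reflexivity.
Qed.

Definition nchar (K : F -> Prop) := forall x y z : F,
  (K (ldiv x z) <-> K (rdiv z x)) /\
  (K (ldiv y (ldiv x z)) <-> K (ldiv (mul x y) z)) /\
  (K (rdiv (rdiv z y) x) <-> K (rdiv z (mul x y))).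

Lemma normal_char K : normal_subloop F K <-> subloop F K /\ nchar K.
Proof.
  split.
  - intros [Hs H]. split; [exact Hs|]. intros x y z.
    destruct (H x y) as [H1 [H2 H3]].
    split; [|split].
    + rewrite <- lcoset_iff, <- rcoset_iff. apply H1.
    + rewrite <- ex_l_iff, <- lcoset_iff. apply H2.
    + rewrite <- ex_r_iff, <- rcoset_iff. apply H3.
  - intros [Hs H]. split; [exact Hs|]. intros x y.
    split; [|split]; intro z; destruct (H x y z) as [H1 [H2 H3]].
    + rewrite lcoset_iff, rcoset_iff. apply H1.
    + rewrite ex_l_iff, lcoset_iff. apply H2.
    + rewrite ex_r_iff, rcoset_iff. apply H3.
Qed.

Lemma sub_ldiv_iff K y t : subloop F K -> K y -> (K (ldiv y t) <-> K t).
Proof.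
  intros [H1 Hs] Hy. split.
  - intro H. rewrite <- (mulKl F y t). apply (Hs _ _ Hy H).
  - intro H. apply (Hs _ _ Hy H).
Qed.

Lemma L1 K a b : normal_subloop F K -> cong F K a b -> K (ldiv a b).
Proof.
  intros HK Hc. apply lcoset_iff. apply Hc. apply lcoset_iff.
  rewrite ldiv_self. apply HK.
Qed.

Lemma L2 K a b : normal_subloop F K -> K (ldiv a b) -> cong F K a b.
Proof.
  intros HK Hab z. rewrite !lcoset_iff.
  apply (proj1 (normal_char _)) in HK. destruct HK as [Hs Hn].
  assert (Hb : b = mul a (ldiv a b)) by (rewrite mulKl; reflexivity).
  rewrite Hb. destruct (Hn a (ldiv a b) z) as [_ [H2 _]].
  rewrite <- H2. rewrite (sub_ldiv_iff K (ldiv a b) (ldiv a z)); auto. reflexivity.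
Qed.

Lemma hom_one {B : Loop} (q : F -> B) : loop_hom q -> q one = one.
Proof.
  intro Hq. assert (H : q one = mul (q one) (q one)).
  { rewrite <- Hq, mul1l. reflexivity. }
  rewrite <- (ldiv_self (q one)). rewrite H at 3.
  rewrite ldivKl. reflexivity.
Qed.

Lemma hom_ldiv {B : Loop} (q : F -> B) a b : loop_hom q -> q (ldiv a b) = ldiv (q a) (q b).
Proof.
  intro Hq. rewrite <- (mulKl F a b) at 2. rewrite Hq, ldivKl. reflexivity.
Qed.

Lemma hom_rdiv {B : Loop} (q : F -> B) a b : loop_hom q -> q (rdiv a b) = rdiv (q a) (q b).
Proof.
  intro Hq. rewrite <- (mulKr F b a) at 2. rewrite Hq, rdivKr. reflexivity.
Qed.

Lemma kernel_normal {B : Loop} (q : F -> B) : loop_hom q ->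
  normal_subloop F (fun z => q z = one).
Proof.
  intro Hq. apply normal_char. split.
  - split; [apply hom_one; exact Hq|].
    intros x y Hx Hy. rewrite Hq, hom_ldiv, hom_rdiv, Hx, Hy by exact Hq.
    split; [apply mul1l|split; [apply ldiv_self|apply rdiv_self]].
  - intros x y z. rewrite !hom_ldiv, !hom_rdiv, !Hq by exact Hq.
    rewrite !ldiv_one_iff, !rdiv_one_iff.
    split; [|split].
    + split; intro; symmetry; assumption.
    + split.
      * intros ->. apply mulKl.
      * intros <-. symmetry. apply ldivKl.
    + split.
      * intros <-. symmetry. apply mulKr.
      * intros ->. apply rdivKr.
Qed.

Lemma conj_normal A B : normal_subloop F A -> normal_subloop F B ->
  normal_subloop F (fun z => A z /\ B z).
Proof.
  rewrite !normal_char. intros [[Ha1 Ha] Hna] [[Hb1 Hb] Hnb]. split.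
  - split; [split; assumption|].
    intros x y [Hxa Hxb] [Hya Hyb].
    destruct (Ha x y Hxa Hya) as [? [? ?]]; destruct (Hb x y Hxb Hyb) as [? [? ?]].
    repeat split; assumption.
  - intros x y z. destruct (Hna x y z) as [A1 [A2 A3]]; destruct (Hnb x y z) as [B1 [B2 B3]].
    tauto.
Qed.

Lemma bruck_normal N : normal_subloop F (bruck_comm F N).
Proof.
  apply normal_char. split.
  - split.
    + intros K HK _ _. apply HK.
    + intros x y Hx Hy. repeat split; intros K HK Hs Hc;
        specialize (Hx K HK Hs Hc); specialize (Hy K HK Hs Hc);
        apply HK; assumption.
  - intros x y z. unfold bruck_comm. repeat split; intros H K HK Hs Hc;
      specialize (H K HK Hs Hc); apply (proj1 (normal_char _)) in HK;
      destruct HK as [_ Hn]; destruct (Hn x y z) as [B1 [B2 B3]]; firstorder.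
Qed.

End Gen.

Definition xb (a b : bool * bool) : bool * bool := (xorb (fst a) (fst b), xorb (snd a) (snd b)).

Definition ALoop : Loop.
Proof.
  refine {| carrier := (bool * bool)%type; mul := xb; one := (false, false);
            ldiv := xb; rdiv := xb |};
  intros; repeat match goal with p : (bool * bool)%type |- _ => destruct p end;
  repeat match goal with b : bool |- _ => destruct b end; reflexivity.
Defined.

Definition th (a b : bool * bool) : Z := if fst a && snd b then 1%Z else 0%Z.

Definition Mc := ((bool * bool) * Z)%type.
Definition mulM (x y : Mc) : Mc := (xb (fst x) (fst y), (snd x + snd y + th (fst x) (fst y))%Z).
Definition ldivM (a x : Mc) : Mc :=
  (xb (fst a) (fst x), (snd x - snd a - th (fst a) (xb (fst a) (fst x)))%Z).
Definition rdivM (x a : Mc) : Mc :=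
  (xb (fst x) (fst a), (snd x - snd a - th (xb (fst x) (fst a)) (fst a))%Z).

Definition MLoop : Loop.
Proof.
  refine {| carrier := Mc; mul := mulM; one := ((false, false), 0%Z);
            ldiv := ldivM; rdiv := rdivM |};
  intros; repeat match goal with p : Mc |- _ => destruct p as [[? ?] ?] end;
  repeat match goal with b : bool |- _ => destruct b end;
  unfold mulM, ldivM, rdivM, th, xb; simpl; f_equal; try lia.
Defined.

Lemma M_central (m x y : MLoop) : fst m = (false, false) ->
  mul m x = mul x m /\ mul (mul m x) y = mul m (mul x y) /\
  mul (mul x m) y = mul x (mul m y) /\ mul (mul x y) m = mul x (mul y m).
Proof.
  destruct m as [[m1 m2] mz]; simpl; intro H; inversion H; subst.
  destruct x as [[x1 x2] xz]; destruct y as [[y1 y2] yz].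
  change (@mul MLoop) with mulM; unfold mulM, xb, th.
  destruct x1, x2, y1, y2; cbn; repeat split; f_equal; lia.
Qed.

Definition Lm {A : Loop} (a : A) : perm_pair A := (fun x => mul a x, fun x => ldiv a x).

Definition uM : MLoop := ((true, false), 0%Z).
Definition vM : MLoop := ((false, true), 0%Z).

Fixpoint cseq {A : Loop} (a b : A) (k : nat) : perm_pair A :=
  match k with
  | 0 => pcomm (Lm a) (Lm b)
  | S k' => pcomm (cseq a b k') (Lm b)
  end.
Definition mseq (k : nat) : perm_pair MLoop := cseq uM vM k.

Fixpoint sk (k : nat) : Z := match k with 0 => 1%Z | S k' => (-2 * sk k')%Z end.
Definition phi (b : bool * bool) : Z := if snd b then (-1)%Z else 1%Z.

Lemma sk_nz k : sk k <> 0%Z.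
Proof. induction k; cbn [sk]; lia. Qed.

Lemma mul_MLoop (x y : MLoop) : mul x y = mulM x y. Proof. reflexivity. Qed.
Lemma ldiv_MLoop (x y : MLoop) : ldiv x y = ldivM x y. Proof. reflexivity. Qed.

Lemma mseq_formula k : forall p : Mc,
  fst (mseq k) p = (fst p, (snd p + sk k * phi (fst p))%Z) /\
  snd (mseq k) p = (fst p, (snd p - sk k * phi (fst p))%Z).
Proof.
  unfold mseq. induction k; intros [[b1 b2] w].
  - simpl cseq. unfold pcomm, pmul, pinv, Lm. cbn [fst snd].
    change (@mul MLoop) with mulM; change (@ldiv MLoop) with ldivM.
    destruct b1, b2; unfold mulM, ldivM, xb, th, phi, uM, vM, sk; cbn [fst snd xorb andb negb]; split; f_equal; try lia.
  - simpl cseq. unfold pcomm, pmul, pinv, Lm. cbn [fst snd].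
    change (@mul MLoop) with mulM; change (@ldiv MLoop) with ldivM.
    split; destruct b1, b2;
    repeat (first [rewrite (proj1 (IHk _)) | rewrite (proj2 (IHk _))];
      unfold mulM, ldivM, xb, th, vM; cbn [fst snd xorb andb negb]);
    unfold mulM, ldivM, xb, th, vM, phi; cbn [fst snd xorb andb negb sk]; f_equal; lia.
Qed.

Lemma cseq_glcs {A : Loop} (a b : A) k : glcs (LMlt A) k (cseq a b k).
Proof.
  assert (HL : forall c : A, LMlt A (Lm c)) by (intro c; apply gen_base; exists c; reflexivity).
  induction k as [|k IH].
  - simpl. unfold pcomm. repeat (apply gen_mul || apply gen_inv); apply HL.
  - simpl. apply gen_base. exists (cseq a b k), (Lm b). repeat split.
    + exact IH.
    + apply HL.
Qed.

Definition Rel {A B : Loop} (h : A -> B) (g : perm_pair A) (G : perm_pair B) :=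
  forall y, h (fst g y) = fst G (h y) /\ h (snd g y) = snd G (h y).

Lemma Rel_pmul {A B : Loop} (h : A -> B) g1 g2 G1 G2 :
  Rel h g1 G1 -> Rel h g2 G2 -> Rel h (pmul g1 g2) (pmul G1 G2).
Proof.
  intros H1 H2 y. simpl. split.
  - rewrite (proj1 (H1 _)), (proj1 (H2 _)). reflexivity.
  - rewrite (proj2 (H2 _)), (proj2 (H1 _)). reflexivity.
Qed.

Lemma Rel_pinv {A B : Loop} (h : A -> B) g G : Rel h g G -> Rel h (pinv g) (pinv G).
Proof. intros H y. simpl. split; apply H. Qed.

Lemma Rel_pcomm {A B : Loop} (h : A -> B) g1 g2 G1 G2 :
  Rel h g1 G1 -> Rel h g2 G2 -> Rel h (pcomm g1 g2) (pcomm G1 G2).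
Proof.
  intros H1 H2. unfold pcomm.
  repeat (apply Rel_pmul || apply Rel_pinv); assumption.
Qed.

Lemma Rel_cseq {A B : Loop} (h : A -> B)
  (hm : forall a y, h (mul a y) = mul (h a) (h y))
  (hl : forall a y, h (ldiv a y) = ldiv (h a) (h y)) a b k :
  Rel h (cseq a b k) (cseq (h a) (h b) k).
Proof.
  assert (HL : forall c, Rel h (Lm c) (Lm (h c))).
  { intros c y. simpl. split; auto. }
  induction k; simpl; apply Rel_pcomm; auto.
Qed.

Theorem proposition3p5 (F : Loop) (iota : nat -> F) (Hfree : free_loop_on iota)
  (L : Loop) (pi : F -> L) (Hhom : loop_hom pi)
  (Hsurj : forall y : L, exists x : F, pi x = y)
  (Hker : forall x : F, pi x = one <-> bruck_lcs F 2 x) :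
  ~ nilpotent_group (LMlt L).
Proof.
  pose (f := fun n : nat => match n with 0 => uM | 1 => vM | _ => (one : MLoop) end).
  destruct (proj1 (Hfree MLoop f)) as [g [Hg Hgi]].
  pose (q := fun z => (fst (g z) : ALoop)).
  assert (Hq : loop_hom q).
  { intros x y. unfold q. rewrite Hg. reflexivity. }
  assert (HF2 : forall x, bruck_lcs F 1 x -> fst (g x) = (false, false)).
  { intros x Hx. apply (Hx (fun z => q z = one)).
    - apply kernel_normal; exact Hq.
    - intros; exact I.
    - intros n a b _.
      repeat split; apply L2; try (apply kernel_normal; exact Hq);
        rewrite (hom_ldiv F q) by exact Hq; apply ldiv_one_iff; rewrite !Hq;
        destruct (q n) as [n1 n2]; destruct (q a) as [a1 a2]; destruct (q b) as [b1 b2];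
        destruct n1, n2, a1, a2, b1, b2; reflexivity. }
  assert (HF3 : forall x, bruck_lcs F 2 x -> g x = one).
  { intros x Hx.
    apply (Hx (fun z => bruck_lcs F 1 z /\ g z = one)).
    - apply conj_normal; [apply bruck_normal | apply kernel_normal; exact Hg].
    - intros k [Hk _]; exact Hk.
    - intros n a b Hn.
      destruct (M_central (g n) (g a) (g b) (HF2 n Hn)) as [C1 [C2 [C3 C4]]].
      assert (HN : normal_subloop F (fun z => bruck_lcs F 1 z /\ g z = one)).
      { apply conj_normal; [apply bruck_normal | apply kernel_normal; exact Hg]. }
      repeat split; apply L2; try exact HN; split;
        try (cbn [bruck_lcs]; intros K HK Hs Hc; apply L1; [exact HK|]; destruct (Hc n a b I) as [? [? [? ?]]];
          first [assumption | intro; symmetry; auto]);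
        rewrite (hom_ldiv F g) by exact Hg; apply ldiv_one_iff; rewrite !Hg; first [assumption | symmetry; assumption]. }
  assert (Hpg : forall x x', pi x = pi x' -> g x = g x').
  { intros x x' E. assert (E2 : pi (ldiv x x') = one).
    { rewrite (hom_ldiv F pi) by exact Hhom. apply ldiv_one_iff. exact E. }
    apply Hker, HF3 in E2. rewrite (hom_ldiv F g) in E2 by exact Hg.
    apply ldiv_one_iff. exact E2. }
  pose (h := fun y : L => g (proj1_sig (constructive_indefinite_description _ (Hsurj y)))).
  assert (Hh : forall x, h (pi x) = g x).
  { intro x. unfold h.
    destruct (constructive_indefinite_description _ (Hsurj (pi x))) as [x' Hx'].
    simpl. apply Hpg. exact Hx'. }
  assert (hm : forall a y, h (mul a y) = mul (h a) (h y)).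
  { intros a y. destruct (Hsurj a) as [x1 <-]. destruct (Hsurj y) as [x2 <-].
    rewrite <- Hhom, !Hh. apply Hg. }
  assert (hl : forall a y, h (ldiv a y) = ldiv (h a) (h y)).
  { intros a y. destruct (Hsurj a) as [x1 <-]. destruct (Hsurj y) as [x2 <-].
    rewrite <- (hom_ldiv F pi) by exact Hhom. rewrite !Hh. apply hom_ldiv. exact Hg. }
  intros [n Hn].
  pose (a := pi (iota 0)). pose (b := pi (iota 1)).
  assert (Ha : h a = uM) by (unfold a; rewrite Hh, Hgi; reflexivity).
  assert (Hb : h b = vM) by (unfold b; rewrite Hh, Hgi; reflexivity).
  assert (E := Hn _ (cseq_glcs a b n) one).
  assert (E2 : h (fst (cseq a b n) one) = h one) by (rewrite E; reflexivity).
  rewrite (proj1 (Rel_cseq h hm hl a b n one)) in E2.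
  assert (H1 : h one = one).
  { rewrite <- (hom_one F pi Hhom), Hh. apply hom_one. exact Hg. }
  rewrite H1, Ha, Hb in E2.
  change (fst (mseq n) ((false, false), 0%Z) = ((false, false), 0%Z)) in E2.
  rewrite (proj1 (mseq_formula n _)) in E2.
  simpl in E2. injection E2. unfold phi. simpl. intro E3.
  apply (sk_nz n). lia.
Qed.
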